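(* Let $A \subset \mathbb{Z}^d$ be a finite set such that $A - A$ generates $\mathbb{Z}^d$ additively and its convex hull $\Delta_A$ is a $d$-dimensional simplex with vertices $v_1, \ldots, v_{d+1}$. Let $\widetilde{v} = (v,1) \in \mathbb{Z}^{d+1}$ denote the lift of $v \in \mathbb{Z}^d$, let $\mathcal{C}_A = \{\sum_{a \in A} n_a \widetilde{a} : n_a \in \mathbb{N}\}$, let $\Lambda = \mathrm{span}_{\mathbb{Z}}\{\widetilde{v}_1, \ldots, \widetilde{v}_{d+1}\}$, and for $\pi \in \mathbb{Z}^{d+1}$ let $\mathcal{S}_\pi$ be the set of elements of $\mathcal{C}_A$ congruent to $\pi$ modulo $\Lambda$. Call $(g, N) \in \mathcal{S}_\pi$ (with $g \in \mathbb{Z}^d$, $N \in \mathbb{N}$) a minimal element of $\mathcal{S}_\pi$ if $(g,N) - \widetilde{v}_i \notin \mathcal{C}_A$ for every $i = 1, \ldots, d+1$. Then every minimal element $(\alpha, M)$ of $\mathcal{S}_\pi$ satisfies \[ M \leq \mathrm{vol}(\Delta_A)\cdot d! - 1 . \] In particular, $\mathcal{S}_\pi$ has finitely many minimal elements.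
   Context: $\mathbb{N} = \{0,1,2,\ldots\}$. For a point $(g,N) \in \mathbb{Z}^d \times \mathbb{Z}$ the last coordinate $N$ is called its height. $\mathrm{vol}(\Delta_A)$ is the $d$-dimensional volume of the convex hull of $A$. *)

(* Defs.v *)
From HB Require Import structures.
From mathcomp Require Import all_boot all_order all_algebra.
Set Implicit Arguments. Unset Strict Implicit. Unset Printing Implicit Defensive.
Import Order.TTheory GRing.Theory Num.Theory.
Local Open Scope ring_scope.

(* Points of Z^d are row vectors 'rV[int]_d; points of Z^(d+1) are pairs
   (g, N) : 'rV[int]_d * int, N being the height (last coordinate).
   The finite set A is given as a sequence of points (duplicates harmless). *)

Definition pt (d : nat) := ('rV[int]_d * int)%type.

Definition lift_pt (d : nat) (v : 'rV[int]_d) : pt d := (v, 1).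

Definition in_cone (d : nat) (A : seq 'rV[int]_d) (p : pt d) : Prop :=
  exists n : 'I_(size A) -> nat,
    p.1 = \sum_(i < size A) (n i)%:Z *: A`_i /\
    p.2 = \sum_(i < size A) (n i)%:Z.

Definition in_lattice (d : nat) (v : 'I_d.+1 -> 'rV[int]_d) (p : pt d) : Prop :=
  exists c : 'I_d.+1 -> int,
    p.1 = \sum_(i < d.+1) c i *: v i /\
    p.2 = \sum_(i < d.+1) c i.

Definition pt_sub (d : nat) (p q : pt d) : pt d := (p.1 - q.1, p.2 - q.2).

Definition in_S (d : nat) (A : seq 'rV[int]_d) (v : 'I_d.+1 -> 'rV[int]_d)
  (pi p : pt d) : Prop :=
  in_cone A p /\ in_lattice v (pt_sub p pi).

Definition minimal_S (d : nat) (A : seq 'rV[int]_d) (v : 'I_d.+1 -> 'rV[int]_d)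
  (pi p : pt d) : Prop :=
  in_S A v pi p /\ forall i : 'I_d.+1, ~ in_cone A (pt_sub p (lift_pt (v i))).

Definition diff_generates (d : nat) (A : seq 'rV[int]_d) : Prop :=
  forall z : 'rV[int]_d, exists c : 'I_(size A) -> 'I_(size A) -> int,
    z = \sum_(i < size A) \sum_(j < size A) c i j *: (A`_i - A`_j).

(* (d+1)x(d+1) integer matrix whose i-th row is the lift (v_i, 1) *)
Definition lift_mx (d : nat) (v : 'I_d.+1 -> 'rV[int]_d) : 'M[int]_d.+1 :=
  \matrix_(i, j) match unlift ord_max j with
                 | Some k => v i 0 k
                 | None => 1
                 end.

Definition affinely_independent (d : nat) (v : 'I_d.+1 -> 'rV[int]_d) : Prop :=
  \det (lift_mx v) != 0.

Definition ratv (d : nat) (a : 'rV[int]_d) : 'rV[rat]_d :=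
  map_mx (fun x : int => x%:~R) a.

Definition in_hull (d : nat) (v : 'I_d.+1 -> 'rV[int]_d) (a : 'rV[int]_d) : Prop :=
  exists lam : 'I_d.+1 -> rat,
    (forall i, 0 <= lam i) /\ \sum_(i < d.+1) lam i = 1 /\
    ratv a = \sum_(i < d.+1) lam i *: ratv (v i).

Definition hull_is_simplex (d : nat) (A : seq 'rV[int]_d)
  (v : 'I_d.+1 -> 'rV[int]_d) : Prop :=
  affinely_independent v /\ (forall i, v i \in A) /\
  (forall a, a \in A -> in_hull v a).

(* vol(conv{v_i}) * d!  (normalized volume of a lattice simplex) *)
Definition normalized_volume (d : nat) (v : 'I_d.+1 -> 'rV[int]_d) : int :=
  `|\det (lift_mx v)|.

(* Main.v *)
Require Import Defs.
From mathcomp Require Import all_boot all_order all_algebra.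
Set Implicit Arguments. Unset Strict Implicit. Unset Printing Implicit Defensive.
Import Order.TTheory GRing.Theory Num.Theory.
Local Open Scope ring_scope.
From mathcomp Require Import zify.
Lemma unit_int_abs (x : int) : x \is a GRing.unit -> `|x|%N = 1%N.
Proof. by rewrite -topredE /= /intUnitRing.unitz /= => /orP [] /eqP ->. Qed.

Lemma pigeon n (L : 'M[int]_n) (K : nat) (f : 'I_K.+1 -> 'rV[int]_n) :
  \det L != 0 -> `|\det L|%N = K ->
  exists j k, j != k /\ exists c, f k - f j = c *m L.
Proof.
move=> detL0 defK.
have [P uP [Q uQ [ds _ defL]]] := int_Smith_normal_form L.
set D := \matrix_(i, j) _ in defL.
have defD : D = diag_mx (\row_i ds`_i).
  by apply/matrixP => i j; rewrite !mxE.
pose e (i : nat) := absz ds`_i.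
have detLE : `|\det L|%N = (\prod_(i < n) e i)%N.
  rewrite defL !det_mulmx defD det_diag !abszM.
  rewrite (unit_int_abs (_ : \det P \is a GRing.unit)) -?unitmxE //.
  rewrite (unit_int_abs (_ : \det Q \is a GRing.unit)) -?unitmxE //.
  rewrite mul1n muln1 /e.
  rewrite (big_morph absz abszM (erefl : absz 1 = 1%N)).
  by apply: eq_bigr => i _; rewrite mxE.
have ds0 (i : 'I_n) : ds`_i != 0.
  apply: contra detL0 => /eqP ds0.
  rewrite -absz_eq0 detLE; apply/eqP; rewrite (bigD1 i) //= /e ds0 /=.
  by rewrite mul0n.
pose Qi := invmx Q.
pose r (x : 'rV[int]_n) (i : 'I_n) := modz ((x *m Qi) 0 i) ds`_i.
have rlt x (i : 'I_n) : (absz (r x i) < e i)%N.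
  have := ltz_mod ((x *m Qi) 0 i) (ds0 i).
  rewrite -(gez0_abs (modz_ge0 _ (ds0 i))) -/(r x i).
  by rewrite -!abszE ltz_nat.
pose F (k : 'I_K.+1) : {dffun forall i : 'I_n, 'I_(e i)} :=
  [ffun i => Ordinal (rlt (f k) i)].
have : ~~ injectiveb F.
  apply/negP => /injectiveP /leq_card.
  rewrite card_dep_ffun card_ord foldrE big_map.
  under eq_bigr do rewrite card_ord.
  by rewrite big_enum /= -detLE defK ltnn.
move=> /injectiveP ninj.
have [j [k [jk Fjk]]] : exists j k, j != k /\ F j = F k.
  case: (boolP [exists j, exists k, (j != k) && (F j == F k)]).
    by move=> /existsP [j /existsP [k /andP [jk /eqP Fjk]]]; exists j, k.
  move=> H; exfalso; apply: ninj => a b Fab.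
  apply/eqP; apply: contraNT H => ab; apply/existsP; exists a; apply/existsP; exists b.
  by rewrite ab Fab eqxx.
exists j, k; split => //.
have hdv (i : 'I_n) : (ds`_i %| (((f k - f j) *m Qi) 0 i)%R)%Z.
  have := congr1 (fun g : {dffun forall i : 'I_n, 'I_(e i)} => nat_of_ord (g i)) Fjk; rewrite !ffunE /= => /eqP.
  rewrite -eqz_nat !gez0_abs ?modz_ge0 // => /eqP Er.
  rewrite mulmxBl [X in (_ %| X)%Z]mxE [X in (_ %| _ + X)%Z]mxE.
  by rewrite -eqz_mod_dvd; apply/eqP; rewrite /r in Er; rewrite Er.
pose w := \row_i divz (((f k - f j) *m Qi) 0 i) ds`_i.
have wD : w *m D = (f k - f j) *m Qi.
  rewrite defD mul_mx_diag; apply/rowP => i; rewrite [LHS]mxE.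
  by rewrite [X in _ * X]mxE [X in X * _]mxE divzK.
exists (w *m invmx P).
rewrite defL !mulmxA -(mulmxA w) mulVmx // mulmx1 wD -mulmxA mulVmx //.
by rewrite mulmx1.
Qed.
Definition emb (d : nat) (p : pt d) : 'rV[int]_d.+1 :=
  \row_j match unlift ord_max j with Some k => p.1 0 k | None => p.2 end.

Definition E (d : nat) (a : 'rV[int]_d) := emb (lift_pt a).

Lemma emb_inj d (p q : pt d) : emb p = emb q -> p = q.
Proof.
case: p q => [p1 p2] [q1 q2] /rowP H; congr pair.
  apply/rowP => k; have := H (lift ord_max k).
  by rewrite !mxE liftK.
by have := H ord_max; rewrite !mxE unlift_none.
Qed.

Lemma emb_last d (p : pt d) : emb p 0 ord_max = p.2.
Proof. by rewrite mxE unlift_none. Qed.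

Lemma row_lift d (v : 'I_d.+1 -> 'rV[int]_d) i : row i (lift_mx v) = E (v i).
Proof. by apply/rowP => j; rewrite !mxE. Qed.

Lemma emb_sub d (p q : pt d) : emb (pt_sub p q) = emb p - emb q.
Proof.
apply/rowP => j; rewrite !mxE; case: (unlift _ _) => //= k.
by rewrite !mxE.
Qed.

Lemma emb_sum d (s : seq 'rV[int]_d) :
  emb (\sum_(a <- s) a, (size s)%:Z) = \sum_(a <- s) E a.
Proof.
elim: s => [|x s IH].
  by apply/rowP => j; rewrite !big_nil !mxE; case: (unlift _ _) => // k; rewrite mxE.
rewrite !big_cons -IH; apply/rowP => j; rewrite !mxE.
case: (unlift _ _) => [k|] /=; first by rewrite !mxE.
by rewrite -add1n PoszD.
Qed.

Lemma sum_nseq (V : zmodType) (T : Type) (F : T -> V) n x :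
  \sum_(a <- nseq n x) F a = F x *+ n.
Proof. by elim: n => [|n IH]; rewrite ?big_nil ?mulr0n //= big_cons IH mulrS. Qed.

Lemma sum_one (T : Type) (s : seq T) : \sum_(a <- s) (1 : int) = (size s)%:Z.
Proof. by elim: s => [|x s IH]; rewrite ?big_nil ?big_cons ?IH //= -add1n PoszD. Qed.

Lemma cone_list d (A : seq 'rV[int]_d) p : in_cone A p ->
  exists s, all (mem A) s /\ p = (\sum_(a <- s) a, (size s)%:Z).
Proof.
case: p => p1 p2 [n [/= -> ->]].
pose s := flatten [seq nseq (n i) A`_i | i <- enum 'I_(size A)].
have sumF (V : zmodType) (F : 'rV[int]_d -> V) :
    \sum_(a <- s) F a = \sum_(i < size A) F A`_i *+ n i.
  rewrite big_flatten big_map big_enum /=.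
  by apply: eq_bigr => i _; rewrite sum_nseq.
exists s; split.
  apply/allP => a /flattenP [t /mapP [i _ ->]] /nseqP [-> _].
  by rewrite /= mem_nth.
congr pair.
  by rewrite sumF; apply: eq_bigr => i _; rewrite -scaler_nat natz.
rewrite -sum_one (sumF _ (fun _ => 1)).
by apply: eq_bigr => i _; rewrite -natz -[RHS]mulr_natr mul1r natz.
Qed.

Lemma ind_sum (V : zmodType) d (A : seq 'rV[int]_d) x (F : 'rV[int]_d -> V) :
  x \in A -> \sum_(i < size A) F A`_i *+ (index x A == i) = F x.
Proof.
move=> xA; have ix : (index x A < size A)%N by rewrite index_mem.
rewrite (bigD1 (Ordinal ix)) //= eqxx mulr1n nth_index // big1 ?addr0 //.
by move=> i; rewrite -val_eqE /= eq_sym => /negbTE ->; rewrite mulr0n.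
Qed.

Lemma list_cone d (A : seq 'rV[int]_d) s : all (mem A) s ->
  in_cone A (\sum_(a <- s) a, (size s)%:Z).
Proof.
move=> sA; exists (fun i : 'I_(size A) => count (fun a => index a A == i) s) => /=.
elim: s sA => [|x s IH] /=.
  by move=> _; rewrite big_nil; split; symmetry; apply: big1 => i _; rewrite ?scale0r.
move=> /andP [xA /IH [IH1 IH2]]; rewrite big_cons IH1; split.
  under [RHS]eq_bigr do rewrite PoszD scalerDl.
  rewrite big_split /=; congr (_ + _).
  rewrite -[LHS](ind_sum id xA); apply: eq_bigr => i _.
  by rewrite -natz scaler_nat.
rewrite -add1n PoszD IH2.
under [RHS]eq_bigr do rewrite PoszD.
rewrite big_split /=; congr (_ + _).
rewrite -[LHS](ind_sum (fun _ => (1:int)) xA); apply: eq_bigr => i _.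
by case: (_ == _).
Qed.

Lemma mul_lift_last d (v : 'I_d.+1 -> 'rV[int]_d) (c : 'rV[int]_d.+1) :
  (c *m lift_mx v) 0 ord_max = \sum_i c 0 i.
Proof. by rewrite mxE; apply: eq_bigr => i _; rewrite mxE unlift_none mulr1. Qed.

Definition toQ m n (M : 'M[int]_(m, n)) : 'M[rat]_(m, n) := map_mx (intmul (1 : rat)) M.

Lemma hull_E d (v : 'I_d.+1 -> 'rV[int]_d) a : in_hull v a ->
  exists lam : 'rV[rat]_d.+1, (forall i, 0 <= lam 0 i) /\
    toQ (E a) = lam *m toQ (lift_mx v).
Proof.
move=> [lam [lam0 [lam1 ha]]]; exists (\row_i lam i); split.
  by move=> i; rewrite mxE.
apply/rowP => j; case: (unliftP ord_max j) => [k ->|->]; rewrite !mxE ?liftK ?unlift_none /=.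
  have := congr1 (fun M : 'rV[rat]_d => M 0 k) ha; rewrite !mxE summxE => ->.
  by apply: eq_bigr => i _; rewrite !mxE liftK.
by rewrite -lam1; apply: eq_bigr => i _; rewrite !mxE unlift_none mulr1.
Qed.

Lemma nonneg d (v : 'I_d.+1 -> 'rV[int]_d) (s : seq 'rV[int]_d) :
  \det (lift_mx v) != 0 -> (forall a, a \in s -> in_hull v a) ->
  forall c, \sum_(a <- s) E a = c *m lift_mx v -> forall i, 0 <= c 0 i.
Proof.
move=> det0 hs c hc i.
have [lam [lam0 hl]] : exists lam : 'rV[rat]_d.+1, (forall i, 0 <= lam 0 i) /\
    toQ (\sum_(a <- s) E a) = lam *m toQ (lift_mx v).
  elim: s hs {hc} => [|x s IH] hs.
    exists 0; split; first by move=> i'; rewrite mxE.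
    by rewrite big_nil mul0mx; apply/rowP => j; rewrite !mxE.
  have [|l1 [l10 h1]] := IH; first by move=> a ah; apply: hs; rewrite inE ah orbT.
  have [|l2 [l20 h2]] := hull_E (hs x _); first by rewrite inE eqxx.
  exists (l2 + l1); split; first by move=> i'; rewrite mxE addr_ge0.
  rewrite big_cons mulmxDl -h1 -h2; apply/rowP => j; rewrite !mxE.
  by rewrite intrD.
have uQ : toQ (lift_mx v) \in unitmx.
  by rewrite unitmxE /toQ det_map_mx unitfE intr_eq0.
have : toQ c = lam.
  apply: (can_inj (mulmxK uQ)) => /=.
  by rewrite -hl hc /toQ map_mxM.
move=> /(congr1 (fun M : 'rV[rat]_d.+1 => M 0 i)); rewrite mxE => ci.
by rewrite -(ler0z rat) ci.
Qed.

Theorem lemma3p1 (d : nat) (A : seq 'rV[int]_d) (v : 'I_d.+1 -> 'rV[int]_d)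
  (hgen : diff_generates A) (hsimp : hull_is_simplex A v)
  (pi : 'rV[int]_d * int) (alpha : 'rV[int]_d) (M : int) :
  minimal_S A v pi (alpha, M) -> M <= normalized_volume v - 1.
Proof.
move=> [[hcone _] hmin].
case: hsimp => hdet [hvA hhull].
have [s [sA hs]] := cone_list hcone.
case: hs => ha hM.
rewrite /normalized_volume.
set L := lift_mx v.
set K := absz (\det L).
case: (ltnP (size s) K) => [lt|ge].
  rewrite hM -abszE -/K; by rewrite lerBrDr -(PoszD _ 1) lez_nat addn1.
exfalso.
pose f (k : 'I_K.+1) := \sum_(a <- take k s) E a.
have [j [k [jk [c hc]]]] : exists j k : 'I_K.+1, (j < k)%N /\ exists c, f k - f j = c *m L.
  have [j [k [jk [c hc]]]] := pigeon f hdet (erefl K).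
  case: (ltngtP j k) => h.
  - by exists j, k; split => //; exists c.
  - by exists k, j; split => //; exists (-c); rewrite mulNmx -hc opprB.
  - by move: jk; rewrite -val_eqE /= h eqxx.
have kS : (k <= size s)%N by rewrite (leq_trans _ ge) // -ltnS.
set seg := drop j (take k s).
have tk : take k s = take j s ++ seg.
  by rewrite /seg -(take_takel s (ltnW jk)) cat_take_drop.
have sdec : s = take j s ++ seg ++ drop k s.
  by rewrite catA -tk cat_take_drop.
have hseg : \sum_(a <- seg) E a = c *m L.
  by rewrite -hc /f tk big_cat /= [_ + \sum_(_ <- seg) _]addrC addrK.
have segA : forall a, a \in seg -> in_hull v a.
  by move=> a /mem_drop /mem_take as_; apply: hhull; exact: (allP sA).
have c0 := nonneg hdet segA hseg.
have sumc : \sum_i c 0 i = (size seg)%:Z.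
  by rewrite -(mul_lift_last v) -hseg -(emb_sum seg) emb_last.
have szseg : (0 < size seg)%N by rewrite /seg size_drop size_takel // subn_gt0.
have [i0 ci0] : exists i0, 0 < c 0 i0.
  case: (boolP [exists i, 0 < c 0 i]) => [/existsP [i ?]|/existsPn H]; first by exists i.
  exfalso; have : \sum_i c 0 i <= \sum_(i < d.+1) (0 : int).
    by apply: ler_sum => i _; rewrite leNgt H.
  by rewrite sumc big1 // lez_nat leqNgt szseg.
apply: (hmin i0).
pose c' (l : 'I_d.+1) := absz (c 0 l - (l == i0)%:R)%R.
have c'E l : (c' l)%:Z = c 0 l - (l == i0)%:R.
  rewrite /c' abszE ger0_norm // subr_ge0; case: eqP => [->|_] /=.
    by rewrite -gtz0_ge1.
  exact: c0.
pose extra := flatten [seq nseq (c' l) (v l) | l <- enum 'I_d.+1].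
pose s' := take j s ++ drop k s ++ extra.
have s'A : all (mem A) s'.
  rewrite !all_cat; apply/and3P; split.
  - by apply/allP => a /mem_take; exact: (allP sA).
  - by apply/allP => a /mem_drop; exact: (allP sA).
  - by apply/allP => a /flattenP [t /mapP [l _ ->]] /nseqP [-> _]; exact: hvA.
have -> : pt_sub (alpha, M) (lift_pt (v i0)) = (\sum_(a <- s') a, (size s')%:Z).
  apply: emb_inj; rewrite emb_sub ha hM !emb_sum -/(E (v i0)).
  rewrite {1}sdec !big_cat /= hseg.
  have hx : \sum_(a <- extra) E a = c *m L - E (v i0).
    rewrite big_flatten big_map big_enum /=.
    transitivity (\sum_l ((c 0 l - (l == i0)%:R) *: E (v l))).
      by apply: eq_bigr => l _; rewrite sum_nseq -scaler_nat natz c'E.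
    rewrite mulmx_sum_row; under eq_bigr do rewrite scalerBl.
    rewrite sumrB; congr (_ - _).
      by apply: eq_bigr => l _; rewrite row_lift.
    rewrite (bigD1 i0) //= eqxx scale1r big1 ?addr0 // => l /negbTE ->.
    by rewrite scale0r.
  rewrite hx -!addrA; congr (_ + _); exact: addrCA.
exact: list_cone.
Qed.
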